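(* Let $0\le\underline{s}<\overline{s}\le1$, $p\in(0,1)$, $u,v>0$ with $u\ne v$, and fix $\varepsilon_0>0$ with $C_{\varepsilon_0}\ne\emptyset$. There exist $\underline{\lambda}>0$ and $\overline{\lambda}<+\infty$ such that for every $f\in F^\infty_{(\underline{s},\overline{s})}$: if $G_f(\lambda,0)=G_f(\lambda,c)=0$ for some $c\in C_{\varepsilon_0}$ and some $\lambda\in\mathcal{E}_0\cap\mathcal{E}_c\cap\big((0,\underline{\lambda})\cup(\overline{\lambda},+\infty)\big)$, then there exist $\underline{s}<z_1<z_2<\overline{s}$ with $f(s)=0$ for all $s\in[z_1,z_2]$.
   Context: $F^\infty_{(\underline{s},\overline{s})}=\{f\in L_\infty(\underline{s},\overline{s})\cap C^0(\underline{s},\overline{s}): \int_{\underline{s}}^{\overline{s}} f(s)\frac{1-2s}{s}ds=0,\ \int_{\underline{s}}^{\overline{s}} f=1,\ f\ge0,\ f(s)\frac{1-s}{s}\in L_\infty(\underline{s},\overline{s})\}$. For $\lambda>0$, $c\in(-1,u)\cap(-v,1)$: $m(\lambda,c)=\frac{\lambda(1+c)}{\lambda(1+c)+(u-c)}$, $mm(\lambda,c)=\frac{\lambda(1-c)}{\lambda(1-c)+(v+c)}$; $\mathcal{E}_c=\{\lambda>0: m(\lambda,c),mm(\lambda,c)\in(\underline{s},\overline{s})\}$. $C=\{c\in(-1,u)\cap(-v,1):\mathcal{E}_c\ne\emptyset\}\setminus\{0\}$, $C_{\varepsilon_0}=C\cap(-1+\varepsilon_0,u-\varepsilon_0)\cap(-v+\varepsilon_0,1-\varepsilon_0)$.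 $G_f(\lambda,c)=p\int_{\underline{s}}^{m(\lambda,c)} f(s)\frac{1-2s}{s}ds+(1-p)\int_{mm(\lambda,c)}^{\overline{s}} f(s)\frac{1-2s}{s}ds$. *)

(* Defs.v *)
From HB Require Import structures.
From mathcomp Require Import all_boot all_order all_algebra.
From mathcomp Require Import all_classical all_reals all_analysis.
Set Implicit Arguments. Unset Strict Implicit. Unset Printing Implicit Defensive.
Import Order.TTheory GRing.Theory Num.Theory.
Import numFieldNormedType.Exports.
Local Open Scope classical_set_scope.
Local Open Scope ring_scope.

Section Defs.
Variable R : realType.
Notation leb := (@lebesgue_measure R).

Definition Finf (slo shi : R) (f : R -> R) : Prop :=
  [/\ {within `]slo, shi[, continuous f},
      (* f in L_infty(slo,shi) (for continuous f: bounded on the interval) *)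
      (exists M : R, forall s, slo < s < shi -> `|f s| <= M),
      (exists M : R, forall s, slo < s < shi -> `|f s * (1 - s) / s| <= M),
      (forall s, slo < s < shi -> 0 <= f s) &
      ((\int[leb]_(s in `]slo, shi[) (f s)%:E = 1%E)%E /\
       (\int[leb]_(s in `]slo, shi[) (f s * (1 - 2 * s) / s)%:E = 0%E)%E)].

Definition m_ (u lam c : R) : R := lam * (1 + c) / (lam * (1 + c) + (u - c)).
Definition mm_ (v lam c : R) : R := lam * (1 - c) / (lam * (1 - c) + (v + c)).

Definition Eset (slo shi u v c : R) : set R :=
  [set lam | 0 < lam /\ slo < m_ u lam c < shi /\ slo < mm_ v lam c < shi].

Definition cdom (u v c : R) : Prop := -1 < c < u /\ - v < c < 1.

Definition Cset (slo shi u v : R) : set R :=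
  [set c | cdom u v c /\ Eset slo shi u v c !=set0 /\ c != 0].

Definition Ceps (slo shi u v eps0 : R) : set R :=
  [set c | c \in Cset slo shi u v /\ -1 + eps0 < c < u - eps0 /\
           - v + eps0 < c < 1 - eps0].

Definition Gf (slo shi p u v : R) (f : R -> R) (lam c : R) : R :=
  p * (\int[leb]_(s in `]slo, m_ u lam c[) (f s * (1 - 2 * s) / s))
  + (1 - p) * (\int[leb]_(s in `]mm_ v lam c, shi[) (f s * (1 - 2 * s) / s)).

End Defs.

(* Main.v *)
Require Import Defs.
From HB Require Import structures.
From mathcomp Require Import all_boot all_order all_algebra.
From mathcomp Require Import all_classical all_reals all_analysis.
From mathcomp Require Import measurable_realfun.
Import Order.TTheory GRing.Theory Num.Theory.
Import numFieldNormedType.Exports.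
From mathcomp Require Import ring lra.
Local Open Scope classical_set_scope.
Local Open Scope ring_scope.

Lemma g_cont (R : realType) (f : R -> R) (slo shi : R) : 0 <= slo ->
  {within `]slo, shi[, continuous f} ->
  {in `]slo, shi[%classic, continuous (fun s => f s * (1 - 2 * s) / s)}.
Proof.
move=> s0; rewrite continuous_open_subspace; last exact: interval_open.
move=> cf s sin; have fc := cf s sin.
have sp : 0 < s by move: sin; rewrite inE /= in_itv /= => /andP[? _]; lra.
apply: (@continuousM _ _ (fun s => f s * (1 - 2 * s)) (fun s => s^-1)).
- apply: (@continuousM _ _ f (fun s => 1 - 2 * s)) => //.
  apply: cvgB; first exact: cvg_cst.
  apply: cvgM; first exact: cvg_cst.
  exact: cvg_id.
- apply: (@continuousV _ _ id); first by rewrite gt_eqF.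
  exact: cvg_id.
Qed.

Lemma pos_int_zero (R : realType) (h : R -> R) (x1 x2 : R) :
  {in `]x1, x2[, continuous h} -> (forall s, x1 < s < x2 -> 0 <= h s) ->
  (@lebesgue_measure R).-integrable `]x1, x2[ (EFin \o h) ->
  \int[@lebesgue_measure R]_(s in `]x1, x2[) h s = 0 ->
  forall s, x1 < s < x2 -> h s = 0.
Proof.
move=> hc h0 hint hI0 s0 s0i.
apply/eqP; rewrite eq_le h0 // andbT leNgt; apply/negP => hp.
have s0in : s0 \in `]x1, x2[ by rewrite in_itv /=.
have nb : \forall x \near s0, h s0 / 2 < h x.
  apply: (cvgr_gt _ (hc s0 s0in)). 
  by rewrite ltr_pdivrMr // ltr_pMr // ltr1n.
have nb2 : \forall x \near s0, x \in `]x1, x2[ := near_in_itvoo s0in.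
have [e /= e0 He] := proj1 (nbhs_ballP _ _) (filterI nb nb2).
have Hb : forall x, s0 - e < x < s0 + e -> h s0 / 2 < h x /\ x \in `]x1, x2[.
  move=> x /andP[xl xr]; apply: He; rewrite /ball /= ltr_norml; apply/andP; split; lra.
have fin : (\int[lebesgue_measure]_(x in `]x1, x2[) (h x)%:E)%E \is a fin_num.
  by apply: (integrable_fin_num _ hint).
have I0 : (\int[lebesgue_measure]_(x in `]x1, x2[) (h x)%:E = 0)%E.
  by move: hI0; rewrite /Rintegral => hf; rewrite -(fineK fin) hf.
have /integrableP[mh _] := hint.
pose A : set R := `]s0 - e, s0 + e[%classic.
have sub : A `<=` `]x1, x2[.
  move=> x /=; rewrite in_itv /= => /Hb [_]; rewrite in_itv /=.
  done.
have : ((h s0 / 2)%:E * (lebesgue_measure A) <= 0)%E.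
  rewrite -I0 -integral_cst //.
  apply: (le_trans (y := (\int[lebesgue_measure]_(x in A) (h x)%:E)%E)).
    apply: ge0_le_integral => //.
    - exact: measurable_itv.
    - move=> x _ /=; rewrite lee_fin; apply: divr_ge0 => //; exact: ltW.
    - exact: (measurable_funS _ sub mh).
    - move=> x; rewrite /A /= in_itv /= => /Hb [hx _]; rewrite lee_fin; exact: ltW.
  apply: ge0_subset_integral.
  - by rewrite /A; exact: measurable_itv.
  - exact: measurable_itv.
  - exact: mh.
  - move=> x /=; rewrite in_itv /= => /andP [xa xb]; rewrite lee_fin; apply: h0.
    by rewrite xa xb.
  - exact: sub.
  - by rewrite /A; exact: measurable_itv.
rewrite /A lebesgue_measure_itv /= ifT; last by rewrite lte_fin; lra.
rewrite -EFinD -EFinM lee_fin leNgt => /negP; apply.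
apply: mulr_gt0; first by apply: divr_gt0.
lra.
Qed.


Lemma g_int (R : realType) (f : R -> R) (slo shi : R) : 0 <= slo ->
  Finf slo shi f ->
  (@lebesgue_measure R).-integrable `]slo, shi[ (EFin \o (fun s => f s * (1 - 2 * s) / s)).
Proof.
move=> s0 [cf [M1 hM1] [M2 hM2] _ _].
apply: measurable_bounded_integrable.
- exact: measurable_itv.
  first [ by rewrite (@lebesgue_measure_itv R `]slo, shi[) /=; case: ifP => _ //; exact: ltry
        | by move: (@lebesgue_measure_itv R `]slo, shi[) => /= ->; case: ifP => _ //; exact: ltry ].
- apply: open_continuous_measurable_fun; first exact: interval_open.
  exact: g_cont.
- rewrite /bounded_near; near=> M.
  move=> x /=; rewrite in_itv /= => xin.
  have xp : 0 < x by case/andP: xin => ? _; lra.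
  have -> : f x * (1 - 2 * x) / x = f x * (1 - x) / x - f x.
    by field; rewrite gt_eqF.
  apply: (le_trans (ler_normB _ _)).
  have h1 := hM1 x xin; have h2 := hM2 x xin.
  have : M1 + M2 <= M by near: M; apply: nbhs_pinfty_ge; rewrite num_real.
  lra.
Unshelve. all: by end_near.
Qed.

Section Split.
Variable R : realType.
Notation mu := (@lebesgue_measure R).

Lemma sub_itv_oo (a b c d : R) : a <= c -> d <= b -> `]c, d[ `<=` `]a, b[.
Proof.
move=> ac db x /=; rewrite !in_itv /= => /andP[h1 h2]; apply/andP; split.
  exact: le_lt_trans ac h1.
exact: lt_le_trans h2 db.
Qed.

Lemma split_left (g : R -> R) (slo shi a b : R) : slo <= a -> a < b -> b <= shi ->
  mu.-integrable `]slo, shi[ (EFin \o g) ->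
  \int[mu]_(s in `]slo, b[) g s - \int[mu]_(s in `]slo, a[) g s =
  \int[mu]_(s in `]a, b[) g s.
Proof.
move=> sa ab bs ig.
have ib : mu.-integrable `]slo, b[ (EFin \o g).
  apply: integrableS ig; [exact: measurable_itv | exact: measurable_itv |].
  exact: sub_itv_oo.
have ia : mu.-integrable `]slo, a[ (EFin \o g).
  apply: integrableS ig; [exact: measurable_itv | exact: measurable_itv |].
  apply: sub_itv_oo => //; exact: (ltW (lt_le_trans ab bs)).
rewrite (@Rintegral_itv_bndo_bndc _ (BRight slo) a g ia).
apply: (@Rintegral_itvB _ g (BRight slo) (BLeft b) a ib).
  by rewrite bnd_simp.
by rewrite bnd_simp.
Qed.

Lemma split_right (g : R -> R) (slo shi d e : R) : slo <= d -> d < e -> e < shi ->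
  mu.-integrable `]slo, shi[ (EFin \o g) ->
  \int[mu]_(s in `]d, shi[) g s - \int[mu]_(s in `]e, shi[) g s =
  \int[mu]_(s in `]d, e]) g s.
Proof.
move=> sd de es ig.
have id : mu.-integrable `]d, shi[ (EFin \o g).
  apply: integrableS ig; [exact: measurable_itv | exact: measurable_itv |].
  exact: sub_itv_oo.
rewrite -(@Rintegral_itvB _ g (BRight d) (BLeft shi) e id); last 2 first.
  by rewrite bnd_simp; apply: ltW.
  by rewrite bnd_simp.
by rewrite opprB addrC subrK.
Qed.
End Split.


Lemma key (R : realType) (f : R -> R) (slo shi p x1 x2 y1 y2 sg : R) :
  0 <= slo -> 0 < p -> p < 1 -> Finf slo shi f ->
  slo <= x1 -> x1 < x2 -> x2 <= shi -> slo <= y1 -> y1 < y2 -> y2 < shi ->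
  sg != 0 ->
  (forall s, x1 < s < x2 -> 0 < sg * (1 - 2 * s)) ->
  (forall s, y1 < s <= y2 -> 0 <= sg * (1 - 2 * s)) ->
  p * (\int[@lebesgue_measure R]_(s in `]x1, x2[) (f s * (1 - 2 * s) / s))
  + (1 - p) * (\int[@lebesgue_measure R]_(s in `]y1, y2]) (f s * (1 - 2 * s) / s)) = 0 ->
  exists z1 z2 : R, slo < z1 /\ z1 < z2 /\ z2 < shi /\
        forall s, z1 <= s <= z2 -> f s = 0.
Proof.
move=> s0 p0 p1 Ff sx1 x12 x2s sy1 y12 y2s sg0 hsg hsg' H.
pose g := fun s => f s * (1 - 2 * s) / s.
have ig : (@lebesgue_measure R).-integrable `]slo, shi[ (EFin \o g) := @g_int R f slo shi s0 Ff.
have ix : (@lebesgue_measure R).-integrable `]x1, x2[ (EFin \o g).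
  apply: integrableS ig; [exact: measurable_itv | exact: measurable_itv |].
  exact: sub_itv_oo.
have iy : (@lebesgue_measure R).-integrable `]y1, y2] (EFin \o g).
  apply: integrableS ig; [exact: measurable_itv | exact: measurable_itv |].
  move=> x /=; rewrite !in_itv /= => /andP[h1 h2]; apply/andP; split.
    exact: le_lt_trans sy1 h1.
  exact: le_lt_trans h2 y2s.
case: Ff => [cf _ _ fpos _].
have gpos : forall s, (x1 < s < x2) || (y1 < s <= y2) -> 0 <= sg * g s.
  move=> s hs.
  have : 0 <= sg * (1 - 2 * s).
    by case/orP: hs => hs; [exact/ltW/hsg | exact: hsg'].
  have [sl ss] : slo < s /\ s < shi.
    case/orP: hs => /andP[h1 h2]; split.
    - exact: le_lt_trans sx1 h1.
    - exact: lt_le_trans h2 x2s.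
    - exact: le_lt_trans sy1 h1.
    - exact: le_lt_trans h2 y2s.
  have sp : 0 < s by exact: le_lt_trans s0 sl.
  have -> : sg * g s = f s * (sg * (1 - 2 * s)) / s by rewrite /g; ring.
  move=> h; apply: divr_ge0; last exact: ltW.
  apply: mulr_ge0; last exact: h.
  by apply: fpos; rewrite sl ss.
set X := \int[@lebesgue_measure R]_(s in `]x1, x2[) (f s * (1 - 2 * s) / s) in H.
set Y := \int[@lebesgue_measure R]_(s in `]y1, y2]) (f s * (1 - 2 * s) / s) in H.
have Ix : 0 <= sg * X.
  rewrite /X -RintegralZl //.
  apply: Rintegral_ge0 => s /=; rewrite in_itv /= => hs.
  by apply: gpos; rewrite hs.
have Iy : 0 <= sg * Y.
  rewrite /Y -RintegralZl //.
  apply: Rintegral_ge0 => s /=; rewrite in_itv /= => hs.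
  by apply: gpos; rewrite hs orbT.
have H2 : p * (sg * X) + (1 - p) * (sg * Y) = 0.
  by rewrite mulrCA (mulrCA (1 - p)) -mulrDr H mulr0.
have hp1 := mulr_ge0 (ltW p0) Ix.
have hp2 : 0 <= (1 - p) * (sg * Y) by apply: mulr_ge0 => //; lra.
have X0 : p * (sg * X) = 0 by lra.
have {}X0 : sg * X = 0.
  by move/eqP: X0; rewrite mulf_eq0 gt_eqF //= => /eqP.
have hz : forall s, x1 < s < x2 -> sg * g s = 0.
  apply: (@pos_int_zero R (fun s => sg * g s)).
  - move=> s sin.
    apply: (@continuousM _ _ (fun _ => sg) g); first exact: cst_continuous.
    apply: (@g_cont R f slo shi s0 cf); rewrite inE /=.
    move: sin; rewrite !in_itv /= => /andP[h1 h2]; apply/andP; split.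
      exact: le_lt_trans sx1 h1.
    exact: lt_le_trans h2 x2s.
  - by move=> s hs; apply: gpos; rewrite hs.
  - have := integrableZl _ sg ix.
    move=> /(_ ltac:(by [])).
    apply: eq_integrable => //= x _.
  - transitivity (sg * X); last exact: X0.
    by rewrite /X -RintegralZl.
exists ((2 * x1 + x2) / 3), ((x1 + 2 * x2) / 3).
split; first lra.
split; first lra.
split; first lra.
move=> s /andP[h1 h2].
have hs : x1 < s < x2 by apply/andP; split; lra.
have := hz s hs.
have hs2 : 0 < sg * (1 - 2 * s) by apply: hsg.
have sp : 0 < s by lra.
rewrite /g => /eqP; rewrite mulf_eq0 (negbTE sg0) /= mulf_eq0 invr_eq0 (gt_eqF sp) orbF.
rewrite mulf_eq0 => /orP[/eqP //|/eqP e].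
by move: hs2; rewrite e mulr0 ltxx.
Qed.

Lemma main_step (R : realType) (f : R -> R) (slo shi p a b d e sg : R) :
  0 <= slo -> 0 < p -> p < 1 -> Finf slo shi f ->
  slo < a < shi -> slo < b < shi -> slo < d < shi -> slo < e < shi ->
  (a < b /\ d < e) \/ (b < a /\ e < d) ->
  (sg = 1 /\ a <= 1/2 /\ b <= 1/2 /\ d <= 1/2 /\ e <= 1/2) \/
  (sg = -1 /\ 1/2 <= a /\ 1/2 <= b /\ 1/2 <= d /\ 1/2 <= e) ->
  p * (\int[@lebesgue_measure R]_(s in `]slo, b[) (f s * (1 - 2 * s) / s))
  + (1 - p) * (\int[@lebesgue_measure R]_(s in `]d, shi[) (f s * (1 - 2 * s) / s)) = 0 ->
  p * (\int[@lebesgue_measure R]_(s in `]slo, a[) (f s * (1 - 2 * s) / s))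
  + (1 - p) * (\int[@lebesgue_measure R]_(s in `]e, shi[) (f s * (1 - 2 * s) / s)) = 0 ->
  exists z1 z2 : R, slo < z1 /\ z1 < z2 /\ z2 < shi /\
        forall s, z1 <= s <= z2 -> f s = 0.
Proof.
move=> s0 p0 p1 Ff /andP[sa ash] /andP[sb bsh] /andP[sd dsh] /andP[se esh] hor hsg Gc G0.
have ig := @g_int R f slo shi s0 Ff.
have sg0 : sg != 0 by case: hsg => [[-> _]|[-> _]]; rewrite ?oppr_eq0 oner_eq0.
case: hor => [[ab de]|[ba ed]].
- apply: (@key R f slo shi p a b d e sg) => //.
  + exact: ltW.
  + exact: ltW.
  + exact: ltW.
  + move=> s /andP[h1 h2]; case: hsg => [[-> ?]|[-> ?]]; rewrite ?mul1r ?mulN1r; lra.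
  + move=> s /andP[h1 h2]; case: hsg => [[-> ?]|[-> ?]]; rewrite ?mul1r ?mulN1r; lra.
  + rewrite -(@split_left R _ _ _ _ _ (ltW sa) ab (ltW bsh) ig).
    rewrite -(@split_right R _ _ _ _ _ (ltW sd) de esh ig).
    rewrite !mulrBr; lra.
- apply: (@key R f slo shi p b a e d sg) => //.
  + exact: ltW.
  + exact: ltW.
  + exact: ltW.
  + move=> s /andP[h1 h2]; case: hsg => [[-> ?]|[-> ?]]; rewrite ?mul1r ?mulN1r; lra.
  + move=> s /andP[h1 h2]; case: hsg => [[-> ?]|[-> ?]]; rewrite ?mul1r ?mulN1r; lra.
  + rewrite -(@split_left R _ _ _ _ _ (ltW sb) ba (ltW ash) ig).
    rewrite -(@split_right R _ _ _ _ _ (ltW se) ed dsh ig).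
    rewrite !mulrBr; lra.
Qed.

Lemma frac_lt (R : realFieldType) (N1 D1 N2 D2 : R) :
  0 < N1 -> 0 < D1 -> 0 < N2 -> 0 < D2 -> N1 * D2 < N2 * D1 ->
  N1 / (N1 + D1) < N2 / (N2 + D2).
Proof.
move=> n1 d1 n2 d2 h.
rewrite ltr_pdivrMr ?addr_gt0 // mulrAC ltr_pdivlMr ?addr_gt0 //.
nra.
Qed.

Lemma frac_le_half (R : realFieldType) (N D : R) :
  0 < N -> 0 < D -> N <= D -> N / (N + D) <= 1 / 2.
Proof.
move=> n d h; rewrite ler_pdivrMr ?addr_gt0 //; lra.
Qed.

Lemma frac_ge_half (R : realFieldType) (N D : R) :
  0 < N -> 0 < D -> D <= N -> 1 / 2 <= N / (N + D).
Proof.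
move=> n d h; rewrite ler_pdivlMr ?addr_gt0 //; lra.
Qed.

Lemma orient (R : realType) (u v c lam : R) :
  0 < u -> 0 < v -> 0 < lam -> 0 < 1 + c -> 0 < u - c -> 0 < 1 - c -> 0 < v + c ->
  c != 0 ->
  (m_ u lam 0 < m_ u lam c /\ mm_ v lam c < mm_ v lam 0) \/
  (m_ u lam c < m_ u lam 0 /\ mm_ v lam 0 < mm_ v lam c).
Proof.
move=> u0 v0 lam0 c1 c2 c3 c4.
rewrite neq_lt => /orP[cn|cp].
  have k1 : 0 < lam * (- c) * (u + 1) by rewrite !mulr_gt0 //; lra.
  have k2 : 0 < lam * (- c) * (v + 1) by rewrite !mulr_gt0 //; lra.
  right; split;
  rewrite /m_ /mm_; apply: frac_lt; rewrite ?mulr_gt0 ?subr0 ?addr0 ?mulr1 //; lra.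
have k1 : 0 < lam * c * (u + 1) by rewrite !mulr_gt0 //; lra.
have k2 : 0 < lam * c * (v + 1) by rewrite !mulr_gt0 //; lra.
left; split;
rewrite /m_ /mm_; apply: frac_lt; rewrite ?mulr_gt0 ?subr0 ?addr0 ?mulr1 //; lra.
Qed.

Lemma small_half (R : realType) (u v c lam eps0 : R) :
  0 < u -> 0 < v -> 0 < lam -> 0 < 1 + c -> 0 < u - c -> 0 < 1 - c -> 0 < v + c ->
  c < u - eps0 -> - v + eps0 < c ->
  lam * (1 + u + v) < eps0 -> lam * (1 + u + v) < u -> lam * (1 + u + v) < v ->
  m_ u lam 0 <= 1/2 /\ m_ u lam c <= 1/2 /\ mm_ v lam c <= 1/2 /\ mm_ v lam 0 <= 1/2.
Proof.
move=> u0 v0 lam0 c1 c2 c3 c4 cu1 cl2 h1 h2 h3.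
have k1 : 0 < lam * (u - c) by rewrite mulr_gt0.
have k2 : 0 < lam * (v + c) by rewrite mulr_gt0.
have k3 : 0 < lam * u by rewrite mulr_gt0.
have k4 : 0 < lam * v by rewrite mulr_gt0.
rewrite /m_ /mm_; split; [|split; [|split]]; apply: frac_le_half;
  rewrite ?mulr_gt0 ?subr0 ?addr0 ?mulr1 //; lra.
Qed.

Lemma large_half (R : realType) (u v c lam eps0 : R) :
  0 < u -> 0 < v -> 0 < lam -> 0 < eps0 -> 0 < 1 + c -> 0 < u - c -> 0 < 1 - c -> 0 < v + c ->
  -1 + eps0 < c -> c < 1 - eps0 ->
  1 + u + v < lam * eps0 -> u < lam -> v < lam ->
  1/2 <= m_ u lam 0 /\ 1/2 <= m_ u lam c /\ 1/2 <= mm_ v lam c /\ 1/2 <= mm_ v lam 0.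
Proof.
move=> u0 v0 lam0 e0 c1 c2 c3 c4 cl1 cu2 hm h2 h3.
have k1 : 0 < lam * (1 + c - eps0) by rewrite mulr_gt0 //; lra.
have k2 : 0 < lam * (1 - c - eps0) by rewrite mulr_gt0 //; lra.
rewrite /m_ /mm_; split; [|split; [|split]]; apply: frac_ge_half;
  rewrite ?mulr_gt0 ?subr0 ?addr0 ?mulr1 //; lra.
Qed.

Theorem proposition10 (R : realType) (slo shi p u v eps0 : R) :
  0 <= slo -> slo < shi -> shi <= 1 ->
  0 < p -> p < 1 -> 0 < u -> 0 < v -> u != v -> 0 < eps0 ->
  Ceps slo shi u v eps0 !=set0 ->
  exists lamlo lamhi : R, 0 < lamlo /\
    forall f : R -> R, Finf slo shi f ->
    forall c lam : R,
      c \in Ceps slo shi u v eps0 ->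
      lam \in Eset slo shi u v 0 -> lam \in Eset slo shi u v c ->
      (lam < lamlo \/ lamhi < lam) ->
      Gf slo shi p u v f lam 0 = 0 -> Gf slo shi p u v f lam c = 0 ->
      exists z1 z2 : R, slo < z1 /\ z1 < z2 /\ z2 < shi /\
        forall s, z1 <= s <= z2 -> f s = 0.
Proof.
move=> s0 ss s1 p0 p1 u0 v0 _ e0 _.
have uv1 : 0 < 1 + u + v by lra.
exists (Num.min (Num.min eps0 u) v / (1 + u + v)), ((1 + u + v) / eps0 + u + v).
split.
  by apply: divr_gt0 => //; rewrite !lt_min e0 u0 v0.
move=> f Ff c lam hc hE0 hEc hlam G0 Gc.
move: hc; rewrite inE => -[hcC [/andP[cl1 cu1] /andP[cl2 cu2]]].
move: hcC; rewrite inE => -[_ [_ c0]].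
move: hE0; rewrite inE => -[lam0 [/andP[sa ash] /andP[se esh]]].
move: hEc; rewrite inE => -[_ [/andP[sb bsh] /andP[sd dsh]]].
rewrite /Gf in G0 Gc.
have c1 : 0 < 1 + c by lra.
have c2 : 0 < u - c by lra.
have c3 : 0 < 1 - c by lra.
have c4 : 0 < v + c by lra.
have hor := @orient R _ _ _ _ u0 v0 lam0 c1 c2 c3 c4 c0.
case: hlam => hl.
- apply: (@main_step R f slo shi p (m_ u lam 0) (m_ u lam c) (mm_ v lam c) (mm_ v lam 0) 1) => //;
    rewrite ?sa ?ash ?sb ?bsh ?sd ?dsh ?se ?esh //.
  have hm : lam * (1 + u + v) < Num.min (Num.min eps0 u) v by rewrite -ltr_pdivlMr.
  move: hm; rewrite !lt_min => /andP[/andP[h1 h2] h3].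
  left; split => //.
  exact: (@small_half R _ _ _ _ _ u0 v0 lam0 c1 c2 c3 c4 cu1 cl2 h1 h2 h3).
- apply: (@main_step R f slo shi p (m_ u lam 0) (m_ u lam c) (mm_ v lam c) (mm_ v lam 0) (-1)) => //;
    rewrite ?sa ?ash ?sb ?bsh ?sd ?dsh ?se ?esh //.
  have hq : 0 < (1 + u + v) / eps0 by apply: divr_gt0.
  have hm : (1 + u + v) < lam * eps0.
    rewrite -ltr_pdivrMr //.
    by move: hl hq u0 v0; clear; lra.
  have h2 : u < lam by move: hl hq u0 v0; clear; lra.
  have h3 : v < lam by move: hl hq u0 v0; clear; lra.
  right; split => //.
  exact: (@large_half R _ _ _ _ _ u0 v0 lam0 e0 c1 c2 c3 c4 cl1 cu2 hm h2 h3).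
Qed.
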